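(* Let $n\in\mathbb{N}$ and positive integers $a_1\ge a_2\ge\dots\ge a_n$, $b$, $c$ with $c>b>a_n$, and consider the words $u=a_1a_2\cdots a_nb$ and $v=a_1a_2\cdots a_nbc$ (which are column words with segments $a_1\cdots a_n\,|\,b$ and $a_1\cdots a_n\,|\,b\,|\,c$). Let $t=\min\{j: b>a_j\}$ and $b'=a_t$. Then: 1. $u$ is twisted Knuth equivalent to a word $b'a'_1\cdots a'_n$ with $b'<a'_1$ and $a'_1\ge a'_2\ge\dots\ge a'_n$; 2. $v$ is twisted Knuth equivalent to a word $b'c'a''_1a''_2\cdots a''_n$ with $b'<c'<a''_1$ and $a''_1\ge a''_2\ge\dots\ge a''_n$.
   Context: A word is a finite sequence of positive integers. Twisted Knuth equivalence $\sim^*$ is the equivalence relation on words generated by: $u\,b\,a\,c\,v\sim^* u\,b\,c\,a\,v$ whenever $c\le b<a$, and $u\,a\,c\,b\,v\sim^* u\,c\,a\,b\,v$ whenever $c<b\le a$, where $a,b,c$ are positive integers and $u,v$ are arbitrary (possibly empty) words. A column word is a word $a_{11}\cdots a_{1c_1}\,a_{21}\cdots a_{2c_2}\cdots a_{k1}\cdots a_{kc_k}$ with $c_1\ge c_2\ge\dots\ge c_k>0$ such that each segment is weakly decreasing ($a_{ij}\ge a_{i,j+1}$) and $a_{i+1,c_{i+1}-j}>a_{i,c_i-j}$ for all $0\le j<c_{i+1}$, $1\le i<k$. *)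

(* Defs.v *)
From mathcomp Require Import all_boot.
From Stdlib Require Import Relations.
Set Implicit Arguments. Unset Strict Implicit. Unset Printing Implicit Defensive.

Definition word := seq nat.

Inductive twk_step : word -> word -> Prop :=
| twk1 (u v : word) (a b c : nat) :
    c <= b -> b < a -> twk_step (u ++ [:: b; a; c] ++ v) (u ++ [:: b; c; a] ++ v)
| twk2 (u v : word) (a b c : nat) :
    c < b -> b <= a -> twk_step (u ++ [:: a; c; b] ++ v) (u ++ [:: c; a; b] ++ v).

Definition twisted_knuth_equiv : word -> word -> Prop :=
  clos_refl_sym_trans word twk_step.

(* Main.v *)
Require Import Defs.
From mathcomp Require Import all_boot.
From Stdlib Require Import Relations.

Set Implicit Arguments. Unset Strict Implicit.
Notation teq := twisted_knuth_equiv.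

Lemma teq_refl x : teq x x. Proof. exact: rst_refl. Qed.
Lemma teq_sym x y : teq x y -> teq y x. Proof. exact: rst_sym. Qed.
Lemma teq_trans x y z : teq x y -> teq y z -> teq x z. Proof. exact: rst_trans. Qed.

Lemma step_ctx u w x y : twk_step x y -> twk_step (u ++ x ++ w) (u ++ y ++ w).
Proof.
case=> [u0 v0 a b c H1 H2|u0 v0 a b c H1 H2].
- rewrite -!catA !catA -!(catA (u ++ u0)) -!catA.
  have := twk1 (u ++ u0) (v0 ++ w) H1 H2. by rewrite -!catA.
- have := twk2 (u ++ u0) (v0 ++ w) H1 H2. by rewrite -!catA.
Qed.

Lemma teq_ctx u w x y : teq x y -> teq (u ++ x ++ w) (u ++ y ++ w).
Proof.
elim=> [x0 y0 H|x0|x0 y0 _ IH|x0 y0 z0 _ IH1 _ IH2].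
- apply: rst_step; exact: step_ctx.
- exact: teq_refl.
- exact: teq_sym.
- exact: teq_trans IH1 IH2.
Qed.

Lemma teq_pre u x y : teq x y -> teq (u ++ x) (u ++ y).
Proof. move=> H; have := teq_ctx u [::] H; by rewrite !cats0. Qed.

Lemma teq_suf w x y : teq x y -> teq (x ++ w) (y ++ w).
Proof. move=> H; exact: (teq_ctx [::] w H). Qed.

Lemma geq_tr : ssrbool.transitive (T:=nat) geq.
Proof. move=> y x z hxy hyz; exact: leq_trans hyz hxy. Qed.

Lemma lemA x q y : path geq x q -> x < y -> teq (x :: q ++ [:: y]) (x :: y :: q).
Proof.
elim: q x => [|z q IH] x /=; first by move=> _ _; exact: teq_refl.
move=> /andP [hzx hp] hxy.
have hzy : z < y by exact: leq_ltn_trans hzx hxy.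
apply: teq_trans (teq_pre [:: x] (IH z hp hzy)) _ => /=.
apply: teq_sym; apply: rst_step.
exact: (twk1 [::] q hzx hxy).
Qed.

Lemma lemB p s y w : sorted geq (p ++ y :: w) -> s < y ->
  teq (p ++ s :: y :: w) (s :: p ++ y :: w).
Proof.
elim: p => [|x p IH] /=; first by move=> _ _; exact: teq_refl.
move=> hp hsy.
have hp' : sorted geq (p ++ y :: w) by move: hp; case: (p ++ y :: w) => //= ? ? /andP[].
apply: teq_trans (teq_pre [:: x] (IH hp' hsy)) _ => /=.
case: p hp {IH hp'} => [|h p] /= hp.
- move: hp => /andP [hyx _]; apply: rst_step; exact: (twk2 [::] w hsy hyx).
- move: hp => /andP [hhx hp].
  have hyh : y <= h.
    have := order_path_min geq_tr hp; rewrite all_cat /= => /and3P [_ ? _]; done.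
  have hsh : s < h by exact: leq_trans hsy hyh.
  apply: rst_step; exact: (twk2 [::] (p ++ y :: w) hsh hhx).
Qed.

Lemma sorted_mid p y w : sorted geq p -> all (fun z => y <= z) p -> path geq y w ->
  sorted geq (p ++ y :: w).
Proof.
case: p => [|x p] //= hp /andP [hyx hall] hw.
elim: p x hp hyx hall => [|z p IH] x /=; first by move=> _ -> _.
move=> /andP [hzx hp] hyx /andP [hyz hall]; rewrite hzx /=; exact: IH.
Qed.

Lemma path_dec x p y w : path geq x (p ++ y :: w) ->
  [/\ path geq x p, path geq y w, y <= x & all (fun z => y <= z) p].
Proof.
elim: p x => [|z p IH] x /=; first by move=> /andP [-> ->].
move=> /andP [hzx /IH [hp hw hyz hall]]; rewrite hzx hp hw hyz hall; split => //.
exact: leq_trans hyz hzx.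
Qed.

Lemma sorted_dec p y w : sorted geq (p ++ y :: w) ->
  [/\ sorted geq p, path geq y w & all (fun z => y <= z) p].
Proof.
case: p => [|x p] /=; first by move=> ->.
by move=> /path_dec [-> -> -> ->].
Qed.
Lemma lemC r s1 s' c : sorted geq (r ++ s1 :: s') -> s1 < c ->
  all (fun z => c <= z) r ->
  sorted geq (r ++ c :: s') /\ teq (r ++ s1 :: s' ++ [:: c]) (s1 :: r ++ c :: s').
Proof.
move=> hs hc hall; have [hr hp _] := sorted_dec hs.
have hs2 : sorted geq (r ++ c :: s').
  apply: sorted_mid => //; apply: (path_le geq_tr _ hp); exact: ltnW.
split => //.
apply: teq_trans (teq_pre r (lemA hp hc)) _.
exact: lemB.
Qed.

Lemma head_ge p y w : all (fun z => y <= z) p -> y <= nth 0 (p ++ y :: w) 0.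
Proof. by case: p => //= x p /andP []. Qed.

Lemma split_find (P : pred nat) l : has P l ->
  exists l1 x l2, [/\ l = l1 ++ x :: l2, all (predC P) l1, P x & nth 0 l (find P l) = x].
Proof.
elim: l => [|y l IH] //=.
case hy: (P y) => /=.
- move=> _; exists [::], y, l; by rewrite hy.
- move=> /IH [l1 [x [l2 [-> h1 h2 h3]]]]; exists (y :: l1), x, l2; by rewrite /= hy h1 h2 h3.
Qed.

Lemma split2 (P : pred nat) l :
  (exists l1 x l2, [/\ l = l1 ++ x :: l2, all (predC P) l1 & P x]) \/ all (predC P) l.
Proof.
case h: (has P l).
- left; have [l1 [x [l2 [? ? ? _]]]] := split_find h; by exists l1, x, l2.
- right; by rewrite all_predC h.
Qed.

Lemma allC_ge (b : nat) p : all (predC (fun x => x < b)) p -> all (fun z => b <= z) p.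
Proof. move=> /allP h; apply/allP => z hz; have := h z hz; by rewrite /= -leqNgt. Qed.

Unset Implicit Arguments. Set Strict Implicit.
Theorem lemma4p2 (n : nat) (a : seq nat) (b c : nat) :
  size a = n ->
  all (fun x => 0 < x) a -> 0 < b -> 0 < c ->
  sorted geq a ->
  last b a < b -> b < c -> 0 < n ->
  let t := find (fun x => x < b) a in
  let b' := nth 0 a t in
  (exists a' : seq nat,
      [/\ size a' = n, b' < nth 0 a' 0, sorted geq a' &
        twisted_knuth_equiv (rcons a b) (b' :: a')]) /\
  (exists (c' : nat) (a'' : seq nat),
      [/\ size a'' = n, b' < c', c' < nth 0 a'' 0, sorted geq a'' &
        twisted_knuth_equiv (rcons (rcons a b) c) (b' :: c' :: a'')]).
Proof.
move=> hsz hpos hb hc hsort hlast hbc hn t b'.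
have hhas : has (fun x => x < b) a.
  move: hsz hlast hn; case/lastP: a {hpos hsort t b'} => [<- //|a0 z _ ] /=.
  by rewrite last_rcons has_rcons => -> .
have [p [x [q [ha hp hx hnth]]]] := split_find hhas.
have -> : b' = x by [].
rewrite ha in hsort.
have [_ _ hpx] := sorted_dec hsort.
have hpb := allC_ge hp.
have [hs1 he1] := lemC hsort hx hpb.
have heq1 : teq (rcons a b) (x :: p ++ b :: q).
  by rewrite ha -cats1 -catA /=.
have hsize : size (p ++ b :: q) = n by rewrite -hsz ha !size_cat.
split.
  exists (p ++ b :: q); split => //.
  exact: leq_trans hx (head_ge q hpb).
have heq2 : teq (rcons (rcons a b) c) (x :: (p ++ b :: q) ++ [:: c]).
  rewrite -cats1; exact: (teq_suf [:: c] heq1).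
case: (split2 (fun z => z < c) p) => [[p1 [y [l2 [hp1 hall hy]]]]|hall].
- have hpc := allC_ge hall.
  have hsort2 : sorted geq (p1 ++ y :: (l2 ++ b :: q)) by move: hs1; rewrite hp1 -catA.
  have hyb : b <= y by have := allP hpb y; rewrite hp1 mem_cat inE eqxx orbT; apply.
  have [hs2 he2] := lemC hsort2 hy hpc.
  exists y, (p1 ++ c :: (l2 ++ b :: q)); split => //.
  + by rewrite -hsize hp1 -!catA !size_cat /= size_cat addnS.
  + exact: leq_trans hx hyb.
  + exact: leq_trans hy (head_ge _ hpc).
  + apply: teq_trans heq2 _.
    rewrite hp1 -catA /= -catA /=.
    have := teq_pre [:: x] he2; by rewrite /= -catA.
- have hpc := allC_ge hall.
  have [hs2 he2] := lemC hs1 hbc hpc.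
  exists b, (p ++ c :: q); split => //.
  + by rewrite -hsize !size_cat.
  + exact: leq_trans hbc (head_ge _ hpc).
  + apply: teq_trans heq2 _.
    have := teq_pre [:: x] he2; by rewrite /= -catA.
Qed.
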